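(* For every $n\ge 2$, the operator system $C(S^1)^{(n)}$ of $n\times n$ complex Toeplitz matrices is hyperrigid in $M_n(\mathbb C)$.
   Context: $C(S^1)^{(n)}\subseteq M_n(\mathbb C)$ is the set of Toeplitz matrices $[\tau_{k-\ell}]_{k,\ell=0}^{n-1}$. An operator subsystem $\mathcal R$ of a unital C$^*$-algebra $\mathcal A$ is hyperrigid in $\mathcal A$ if, for every representation $\pi:\mathcal A\to B(\mathcal H_\pi)$, the unital completely positive map $\pi|_{\mathcal R}$ has a unique extension to a completely positive linear map on $\mathcal A$ (namely $\pi$ itself). *)

(* Defs.v *)
(* complex numbers are  R[i] = complex R  over an arbitrary
   R : realType (mathcomp-real-closed complex.v), which is a
   numClosedFieldType (conjugation  z^* , order  0 <= z  meaning "z real, >= 0"). *)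
From HB Require Import structures.
From mathcomp Require Import all_boot all_order all_algebra.
From mathcomp Require Import reals.
From mathcomp Require Import complex.
Set Implicit Arguments.
Unset Strict Implicit.
Unset Printing Implicit Defensive.
Import Order.TTheory GRing.Theory Num.Theory.
Local Open Scope ring_scope.
Local Open Scope complex_scope.

Section Defs.
Variable R : realType.
Local Notation C := R[i].

Section Hilbert.
Variable H : lmodType C.
Variable ip : H -> H -> C.   (* inner product, linear in the first argument *)

Definition is_hilbert : Prop :=
  [/\ (forall a x y z, ip (a *: x + y) z = a * ip x z + ip y z),
      (forall x y, ip y x = (ip x y)^*),
      (forall x, 0 <= ip x x),
      (forall x, ip x x = 0 -> x = 0) &
      (* completeness w.r.t. the norm ||x|| = sqrt(ip x x) *)
      (forall u : nat -> H,
         (forall eps : C, 0 < eps -> exists N : nat, forall m k : nat,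
             (N <= m)%N -> (N <= k)%N -> ip (u m - u k) (u m - u k) < eps) ->
         exists x : H, forall eps : C, 0 < eps -> exists N : nat, forall m : nat,
             (N <= m)%N -> ip (u m - x) (u m - x) < eps)].

Definition bounded_op (T : H -> H) : Prop :=
  (forall a x y, T (a *: x + y) = a *: T x + T y) /\
  exists M : C, forall x, ip (T x) (T x) <= M * ip x x.

Definition mxadj n (a : 'M[C]_n) : 'M[C]_n := \matrix_(i, j) (a j i)^*.

Definition is_rep n (pi : 'M[C]_n -> H -> H) : Prop :=
  [/\ (forall a, bounded_op (pi a)),
      (forall c a b x, pi (c *: a + b) x = c *: pi a x + pi b x),
      (forall x, pi 1%:M x = x),
      (forall a b x, pi (a *m b) x = pi a (pi b x)) &
      (forall a x y, ip (pi a x) y = ip x (pi (mxadj a) y))].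

(* An element [a_ij] of
   M_k(M_n(C)) = M_(kn)(C) is positive iff its quadratic form is >= 0;
   an element [T_ij] of M_k(B(H)) = B(H^k) is positive iff
   sum_ij <T_ij x_j, x_i> >= 0 for all x in H^k. *)
Definition is_cp n (phi : 'M[C]_n -> H -> H) : Prop :=
  [/\ (forall a, bounded_op (phi a)),
      (forall c a b x, phi (c *: a + b) x = c *: phi a x + phi b x) &
      (forall (k : nat) (A : 'I_k -> 'I_k -> 'M[C]_n),
         (forall v : 'I_k -> 'I_n -> C,
            0 <= \sum_(i < k) \sum_(j < k) \sum_(r < n) \sum_(s < n)
                   (v i r)^* * A i j r s * v j s) ->
         forall x : 'I_k -> H,
            0 <= \sum_(i < k) \sum_(j < k) ip (phi (A i j) (x j)) (x i))].
End Hilbert.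

(* Toeplitz matrices [tau_(k-l)]_(k,l) : the operator system C(S^1)^(n) *)
Definition toeplitz n (a : 'M[C]_n) : Prop :=
  exists tau : int -> C, a = \matrix_(k, l) tau (k%:Z - l%:Z).

Definition hyperrigid_in_Mn n (S : 'M[C]_n -> Prop) : Prop :=
  forall (H : lmodType C) (ip : H -> H -> C), is_hilbert ip ->
  forall pi : 'M[C]_n -> H -> H, is_rep ip pi ->
  forall phi : 'M[C]_n -> H -> H, is_cp ip phi ->
  (forall a, S a -> forall x, phi a x = pi a x) ->
  forall a x, phi a x = pi a x.
End Defs.

(* Main.v *)
Require Import Defs.
From HB Require Import structures.
From mathcomp Require Import all_boot all_order all_algebra.
From mathcomp Require Import reals complex.
From mathcomp Require Import ring lra zify.
Set Implicit Arguments. Unset Strict Implicit. Unset Printing Implicit Defensive.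
Import Order.TTheory GRing.Theory Num.Theory.
Local Open Scope ring_scope.
Local Open Scope complex_scope.

Lemma realquad (R : realType) (a g : R) : (forall s : R, 0 <= s * a + s * s * g) -> a = 0.
Proof.
move=> h; have h1 := h 1; have h2 := h (-1).
have gp : 0 <= g by nra.
have g1 : 0 < g + 1 by lra.
set u := (g+1)^-1.
have e : (g+1) * u = 1 by rewrite /u mulfV // gt_eqF.
have up : 0 < u by rewrite /u invr_gt0.
have h3 := h (- a * u).
have : (- a * u) * a + (- a * u) * (- a * u) * g = - (a * a) * u * u by
  rewrite -[X in _ = X]addr0 -[X in X * u * u]addr0 ; nra.
nra.
Qed.

Lemma cquad (R : realType) (al be ga : R[i]) :
  (forall t : R[i], 0 <= t * al + t^* * be + t * t^* * ga) -> al = 0.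
Proof.
case: al be ga => a1 a2 [b1 b2] [g1 g2] h.
have Hr (s : R) : 0 <= s*(a1+b1) + s*s*g1 /\ s*(a2+b2) + s*s*g2 = 0.
  move: (h (s +i* 0)); rewrite lecE /=; simpc => /andP[/eqP e1 e2]; split; nra.
have Hi (s : R) : 0 <= s*(b2-a2) + s*s*g1 /\ s*(a1-b1) + s*s*g2 = 0.
  move: (h (0 +i* s)); rewrite lecE /=; simpc => /andP[/eqP e1 e2]; split; nra.
have E1 := realquad (fun s => (Hr s).1).
have E2 := realquad (fun s => (Hi s).1).
have [F1 _] := Hr 1; have [F2 _] := Hr (-1).
have [G1 _] := Hi 1; have [G2 _] := Hi (-1).
have [_ K1] := Hr 1; have [_ K2] := Hr (-1).
have [_ L1] := Hi 1; have [_ L2] := Hi (-1).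
apply/eqP; rewrite eq_complex /=; apply/andP; split; apply/eqP; nra.
Qed.
Lemma gram_pos (R : realType) n k (X : 'I_k -> 'M[R[i]]_n) (v : 'I_k -> 'I_n -> R[i]) :
  0 <= \sum_(i < k) \sum_(j < k) \sum_(r < n) \sum_(s < n)
                   (v i r)^* * (mxadj (X i) *m X j) r s * v j s.
Proof.
have -> : \sum_(i < k) \sum_(j < k) \sum_(r < n) \sum_(s < n)
                   (v i r)^* * (mxadj (X i) *m X j) r s * v j s =
   \sum_(m < n) (\sum_(i < k) \sum_(r < n) (X i m r * v i r))^* *
                (\sum_(j < k) \sum_(s < n) (X j m s * v j s)).
  rewrite /mxadj.
  under eq_bigr => i _ do under eq_bigr => j _ do under eq_bigr => r _ do
     under eq_bigr => s _ do rewrite !mxE big_distrr big_distrl /=.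
  under eq_bigr => i _ do rewrite exchange_big.
  under eq_bigr => i _ do under eq_bigr => r _ do under eq_bigr => j _ do rewrite exchange_big.
  under eq_bigr => i _ do under eq_bigr => r _ do rewrite exchange_big.
  under eq_bigr => i _ do rewrite exchange_big.
  rewrite exchange_big; apply: eq_bigr => m _.
  rewrite rmorph_sum big_distrl; apply: eq_bigr => i _.
  rewrite rmorph_sum big_distrl; apply: eq_bigr => r _.
  rewrite big_distrr; apply: eq_bigr => j _.
  rewrite big_distrr; apply: eq_bigr => s _ /=.
  rewrite !mxE rmorphM /=; ring.
apply: sumr_ge0 => m _; rewrite mulrC; exact: mulcJ_ge0.
Qed.
Section Mats.
Variable R : realType.
Local Notation C := R[i].
Variable n : nat.

Definition Lm k : 'M[C]_n := \matrix_(r, m) ((r : nat) == m + k)%N%:R.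
Definition Um k : 'M[C]_n := \matrix_(r, m) ((m : nat) == r + k)%N%:R.

Lemma mul_ind (g h : 'I_n -> nat) (P Q : pred 'I_n) :
 (\matrix_(r, m) (((m:nat) == g r) && P r)%:R : 'M[C]_n) *m
   (\matrix_(m, s) (((m:nat) == h s) && Q s)%:R) =
 \matrix_(r,s) ([&& (g r < n)%N, g r == h s, P r & Q s])%:R.
Proof.
apply/matrixP => r s; rewrite !mxE.
case: (ltnP (g r) n) => hg /=.
  rewrite (bigD1 (Ordinal hg)) //= !mxE eqxx /= big1 ?addr0.
    by case: (P r); case: (g r == h s); case: (Q s); rewrite /= ?mul1r ?mul0r.
  move=> m ne; rewrite !mxE.
  have -> : ((m : nat) == g r) = false by apply/negbTE.
  by rewrite mul0r.
rewrite big1 // => m _; rewrite !mxE.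
have -> : ((m : nat) == g r) = false.
  by apply/negbTE; rewrite neq_ltn (leq_trans (ltn_ord m) hg).
by rewrite mul0r.
Qed.

Lemma LmA k : Lm k = \matrix_(r, m) (((m:nat) == r - k)%N && (k <= r)%N)%:R.
Proof.
apply/matrixP => r m; rewrite !mxE; congr ((nat_of_bool _)%:R).
by apply/idP/idP; lia.
Qed.
Lemma LmB k : Lm k = \matrix_(m, s) (((m:nat) == s + k)%N && true)%:R.
Proof. by apply/matrixP => r m; rewrite !mxE andbT. Qed.
Lemma UmA k : Um k = \matrix_(r, m) (((m:nat) == r + k)%N && true)%:R.
Proof. by apply/matrixP => r m; rewrite !mxE andbT. Qed.
Lemma UmB k : Um k = \matrix_(m, s) (((m:nat) == s - k)%N && (k <= s)%N)%:R.
Proof.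
apply/matrixP => r m; rewrite !mxE; congr ((nat_of_bool _)%:R).
by apply/idP/idP; lia.
Qed.

Lemma adjL k : mxadj (Lm k) = Um k.
Proof. by apply/matrixP => r m; rewrite !mxE conjc_nat. Qed.
Lemma adjU k : mxadj (Um k) = Lm k.
Proof. by apply/matrixP => r m; rewrite !mxE conjc_nat. Qed.

Lemma toepL k : toeplitz (Lm k).
Proof.
exists (fun z : int => (z == k%:Z)%:R); apply/matrixP => r m; rewrite !mxE.
by rewrite subr_eq -PoszD eqz_nat addnC.
Qed.
Lemma toepU k : toeplitz (Um k).
Proof.
exists (fun z : int => (- z == k%:Z)%:R); apply/matrixP => r m; rewrite !mxE.
by rewrite opprB subr_eq -PoszD eqz_nat addnC.
Qed.
Lemma toep1 : toeplitz (1%:M : 'M[C]_n).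
Proof.
exists (fun z : int => (z == 0)%:R); apply/matrixP => r m; rewrite !mxE.
by rewrite subr_eq0 eqz_nat.
Qed.

Lemma pair_id k : (k <= n)%N -> Um k *m Lm k + Lm (n - k) *m Um (n - k) = 1%:M.
Proof.
move=> kn; rewrite {1}UmA {1}LmB LmA UmB !mul_ind.
apply/matrixP => r s; rewrite !mxE -natrD.
have rn := ltn_ord r; have sn := ltn_ord s.
have -> : (r == s) = ((r : nat) == s) by [].
congr (_%:R).
lia.
Qed.

Lemma delta_id (i j : 'I_n) : (2 <= n)%N ->
  Lm i *m (Um n.-1 *m Lm (n.-1 - j)) = delta_mx i j.
Proof.
move=> n2.
have -> : Um n.-1 *m Lm (n.-1 - j) =
   \matrix_(m, s) (((m:nat) == 0)%N && (s == j))%:R.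
  rewrite UmA LmB mul_ind; apply/matrixP => r s; rewrite !mxE.
  congr ((nat_of_bool _)%:R).
  have rn := ltn_ord r; have sn := ltn_ord s; have jn := ltn_ord j.
  rewrite -[s == j]/((s:nat) == j); apply/idP/idP; lia.
rewrite LmA mul_ind; apply/matrixP => r s; rewrite !mxE; congr ((nat_of_bool _)%:R).
have rn := ltn_ord r; have i_n := ltn_ord i; have sn := ltn_ord s; have jn := ltn_ord j.
rewrite -[s == j]/((s:nat) == j) -[r == i]/((r:nat) == i); apply/idP/idP; lia.
Qed.
End Mats.
Section An.
Variable R : realType.
Local Notation C := R[i].
Variable H : lmodType C.
Variable ip : H -> H -> C.
Hypothesis hH : is_hilbert ip.

Lemma ipl a x y z : ip (a *: x + y) z = a * ip x z + ip y z.
Proof. by case: hH. Qed.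
Lemma ipc x y : ip y x = (ip x y)^*.
Proof. by case: hH. Qed.
Lemma ip_nondeg d : (forall z, ip d z = 0) -> d = 0.
Proof. by case: hH => _ _ _ h _ hd; apply: h; apply: hd. Qed.

Lemma ip0l z : ip 0 z = 0.
Proof.
have e := ipl 1 0 0 z; rewrite scaler0 addr0 mul1r in e.
by apply: (@addrI _ (ip 0 z)); rewrite addr0 -e.
Qed.
Lemma ipD x y z : ip (x + y) z = ip x z + ip y z.
Proof. by have := ipl 1 x y z; rewrite scale1r mul1r. Qed.
Lemma ipZ a x z : ip (a *: x) z = a * ip x z.
Proof. by have := ipl a x 0 z; rewrite !addr0 ip0l addr0. Qed.
Lemma ipN x z : ip (- x) z = - ip x z.
Proof. by rewrite -scaleN1r ipZ mulN1r. Qed.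
Lemma ipZr a x z : ip z (a *: x) = a^* * ip z x.
Proof. by rewrite ipc ipZ rmorphM /= -ipc. Qed.
Lemma ipNr x z : ip z (- x) = - ip z x.
Proof. by rewrite -scaleN1r ipZr rmorphN rmorph1 mulN1r. Qed.
Lemma ipDr x y z : ip z (x + y) = ip z x + ip z y.
Proof. by rewrite ipc ipD rmorphD /= -!ipc. Qed.

Variable n : nat.
Section Lin.
Variable f : 'M[C]_n -> H -> H.
Hypothesis lf : forall c a b x, f (c *: a + b) x = c *: f a x + f b x.
Lemma f0 x : f 0 x = 0.
Proof.
have e := lf 1 0 0 x; rewrite scaler0 addr0 scale1r in e.
by apply: (@addrI _ (f 0 x)); rewrite addr0 -e.
Qed.
Lemma fD a b x : f (a + b) x = f a x + f b x.
Proof. by have := lf 1 a b x; rewrite !scale1r. Qed.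
Lemma fZ c a x : f (c *: a) x = c *: f a x.
Proof. by have := lf c a 0 x; rewrite !addr0 f0 addr0. Qed.
Lemma fsum (I : finType) (F : I -> 'M[C]_n) x : f (\sum_i F i) x = \sum_i f (F i) x.
Proof.
elim/big_rec2: _ => [|i y a _ <-]; first by rewrite f0.
by rewrite fD.
Qed.
End Lin.

Section Op.
Variable T : H -> H.
Hypothesis lT : forall a x y, T (a *: x + y) = a *: T x + T y.
Lemma T0 : T 0 = 0.
Proof.
have e := lT 1 0 0; rewrite scaler0 addr0 scale1r in e.
by apply: (@addrI _ (T 0)); rewrite addr0 -e.
Qed.
Lemma TZ a x : T (a *: x) = a *: T x.
Proof. by have := lT a x 0; rewrite !addr0 T0 addr0. Qed.
Lemma TN x : T (- x) = - T x.
Proof. by rewrite -scaleN1r TZ scaleN1r. Qed.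
End Op.

Lemma mxadjK (a : 'M[C]_n) : mxadj (mxadj a) = a.
Proof. by apply/matrixP => i j; rewrite !mxE conjcK. Qed.
Lemma mxadj1 : mxadj (1%:M : 'M[C]_n) = 1%:M.
Proof. by apply/matrixP => i j; rewrite !mxE eq_sym conjc_nat. Qed.

Variable pi phi : 'M[C]_n -> H -> H.
Hypothesis hpi : is_rep ip pi.
Hypothesis hphi : is_cp ip phi.
Hypothesis hag : forall a, toeplitz a -> forall x, phi a x = pi a x.

Lemma pi_lin c a b x : pi (c *: a + b) x = c *: pi a x + pi b x.
Proof. by case: hpi. Qed.
Lemma phi_lin c a b x : phi (c *: a + b) x = c *: phi a x + phi b x.
Proof. by case: hphi. Qed.
Lemma pi_op a c x y : pi a (c *: x + y) = c *: pi a x + pi a y.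
Proof. by case: hpi => h _ _ _ _; case: (h a). Qed.
Lemma phi_op a c x y : phi a (c *: x + y) = c *: phi a x + phi a y.
Proof. by case: hphi => h _ _; case: (h a). Qed.
Lemma pi1 x : pi 1%:M x = x.
Proof. by case: hpi. Qed.
Lemma piM a b x : pi (a *m b) x = pi a (pi b x).
Proof. by case: hpi. Qed.
Lemma piadj a x y : ip (pi a x) y = ip x (pi (mxadj a) y).
Proof. by case: hpi. Qed.
Lemma cp k (A : 'I_k -> 'I_k -> 'M[C]_n) :
  (forall v : 'I_k -> 'I_n -> C,
            0 <= \sum_(i < k) \sum_(j < k) \sum_(r < n) \sum_(s < n)
                   (v i r)^* * A i j r s * v j s) ->
  forall x : 'I_k -> H, 0 <= \sum_(i < k) \sum_(j < k) ip (phi (A i j) (x j)) (x i).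
Proof. by case: hphi => _ _ h; apply: h. Qed.

Lemma schwarz c : (forall x, phi c x = pi c x) ->
  (forall x, phi (mxadj c) x = pi (mxadj c) x) ->
  forall x, 0 <= ip (phi (mxadj c *m c) x) x - ip (pi (mxadj c *m c) x) x.
Proof.
move=> hc hc' x.
pose X := fun i : 'I_2 => nth 0 [:: 1%:M; c] i.
pose xv := fun i : 'I_2 => nth 0 [:: - pi c x; x] i.
have := @cp 2 (fun i j => mxadj (X i) *m X j) (gram_pos X) xv.
rewrite !big_ord_recl !big_ord0 /= !addr0 /X /xv /= mxadj1 !mul1mx mulmx1 hc hc' (hag (@toep1 R n)) pi1.
rewrite (TN (pi_op (mxadj c))) !ipN !ipNr opprK piM [ip (pi (mxadj c) _) x]piadj mxadjK.
by move=> h; apply: le_trans h _; rewrite le_eqVlt; apply/orP; left; apply/eqP; ring.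
Qed.

Definition F d x := ip (phi d x) x - ip (pi d x) x.

Lemma eqF d1 d2 : toeplitz (d1 + d2) -> (forall x, 0 <= F d1 x) ->
  (forall x, 0 <= F d2 x) -> forall x, F d1 x = 0.
Proof.
move=> ht h1 h2 x.
have e : F d1 x + F d2 x = 0.
  have := hag ht x; rewrite (fD phi_lin) (fD pi_lin) => hx.
  have := congr1 (fun u => ip u x) hx; rewrite /F /= !ipD addrACA => ->; ring.
by move/eqP: e; rewrite paddr_eq0 // => /andP[/eqP].
Qed.

Lemma leftmul c : (forall x, phi c x = pi c x) ->
  (forall x, phi (mxadj c) x = pi (mxadj c) x) ->
  (forall x, F (mxadj c *m c) x = 0) ->
  forall b w, phi (mxadj c *m b) w = pi (mxadj c) (phi b w).
Proof.
move=> hc hc' hF b w.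
apply/eqP; rewrite -subr_eq0; apply/eqP; apply: ip_nondeg => z.
rewrite ipD ipN piadj mxadjK.
apply: (@cquad _ _ (- ip (phi (mxadj b) (pi c z)) w + ip (phi (mxadj b *m c) z) w)
                   (ip (phi (mxadj b *m b) w) w)) => t.
pose X := fun i : 'I_3 => nth 0 [:: 1%:M; c; b] i.
pose xv := fun i : 'I_3 => nth 0 [:: - pi c z; z; t *: w] i.
have := @cp 3 (fun i j => mxadj (X i) *m X j) (gram_pos X) xv.
rewrite !big_ord_recl !big_ord0 /= !addr0 /X /xv /= mxadj1 !mul1mx !mulmx1 hc hc' (hag (@toep1 R n)) pi1.
have := hF z; rewrite /F => /eqP; rewrite subr_eq0 => /eqP ->.
rewrite (TN (pi_op (mxadj c))) !(TN (phi_op _)) !(TZ (phi_op _)) !ipN !ipNr !ipZ !ipZr opprK.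
rewrite piM [ip (pi (mxadj c) _) z]piadj mxadjK.
by move=> h; apply: le_trans h _; rewrite le_eqVlt; apply/orP; left; apply/eqP; ring.
Qed.

Local Notation L := (@Lm R n).
Local Notation U := (@Um R n).

Lemma FLU i : (i <= n)%N -> forall x, F (L i *m U i) x = 0.
Proof.
move=> hi; apply: (@eqF _ (U (n - i) *m L (n - i))).
- rewrite addrC; have := @pair_id R n (n - i) (leq_subr _ _); rewrite subKn // => ->.
  exact: toep1.
- by move=> x; rewrite -{1}adjU; apply: schwarz => y; rewrite ?adjU; apply: hag;
    [apply: toepU | apply: toepL].
- by move=> x; rewrite -{1}adjL; apply: schwarz => y; rewrite ?adjL; apply: hag;
    [apply: toepL | apply: toepU].
Qed.

Lemma FUL : (1 <= n)%N -> forall x, F (U n.-1 *m L n.-1) x = 0.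
Proof.
move=> hn; apply: (@eqF _ (L 1 *m U 1)).
- have := @pair_id R n n.-1 (leq_pred _).
  have -> : (n - n.-1 = 1)%N by lia.
  move=> ->; exact: toep1.
- by move=> x; rewrite -{1}adjL; apply: schwarz => y; rewrite ?adjL; apply: hag;
    [apply: toepL | apply: toepU].
- by move=> x; rewrite -{1}adjU; apply: schwarz => y; rewrite ?adjU; apply: hag;
    [apply: toepU | apply: toepL].
Qed.

Lemma main : (2 <= n)%N -> forall a x, phi a x = pi a x.
Proof.
move=> n2 a x.
have hL (i : 'I_n) b w : phi (L i *m b) w = pi (L i) (phi b w).
  rewrite -adjU; apply: leftmul => y; rewrite ?adjU.
  + by apply: hag; apply: toepU.
  + by apply: hag; apply: toepL.
  + by apply: FLU; apply: ltnW.
have hU b w : phi (U n.-1 *m b) w = pi (U n.-1) (phi b w).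
  rewrite -adjL; apply: leftmul => y; rewrite ?adjL.
  + by apply: hag; apply: toepL.
  + by apply: hag; apply: toepU.
  + by apply: FUL; apply: ltnW.
have hd (i j : 'I_n) y : phi (delta_mx i j) y = pi (delta_mx i j) y.
  by rewrite -(delta_id R i j n2) hL hU (hag (toepL _ _ _) _) !piM.
rewrite (matrix_sum_delta a) (fsum phi_lin) (fsum pi_lin); apply: eq_bigr => i _.
rewrite (fsum phi_lin) (fsum pi_lin); apply: eq_bigr => j _.
by rewrite (fZ phi_lin) (fZ pi_lin) hd.
Qed.
End An.

Theorem proposition2p3 (R : realType) (n : nat) :
  (2 <= n)%N -> hyperrigid_in_Mn (@toeplitz R n).
Proof.
move=> n2 H ip hH pi hpi phi hphi hag a x.
exact: (main hH hpi hphi hag n2 a x).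
Qed.
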